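(* Assume each bus has either no generator or at least two generators, and $x^*_n>0$ for all $n$; let $b^*_n=2a_nx^*_n+c_n$. Consider any execution of the Bid Adjustment Algorithm with $0<\beta_k<2a_n$ for all $n$ and $k\ge1$, and let $a_{\min}=\min_na_n$ and $\bar y=\sum_{i=1}^{N_b}y_i$. Then for all $k\ge1$, $$\|b(k+1)-b(k)\|^2\ \le\ \frac{\beta_k^2}{2a_{\min}^2}\|b(k)-b^*\|^2+8\beta_k^2\bar y^2.$$
   Context: Network: directed graph with buses $\{1,\dots,N_b\}$, edge set $\mathcal E$, line flow limits $\bar z_{ij}>0$, $G_i$ the set of generators at bus $i$ (the $G_i$ partition $\{1,\dots,N\}$), loads $y_i\ge0$. Generator $n$ has cost $f_n(x)=a_nx^2+c_nx$, $a_n>0$, $c_n\ge0$. DC-OPF: minimize $\sum_n f_n(x_n)$ over $(x,z)$ s.t. $\sum_{j:(i,j)\in\mathcal E}z_{ij}-\sum_{j:(j,i)\in\mathcal E}z_{ji}=\sum_{n\in G_i}x_n-y_i$ for all $i$, $|z_{ij}|\le\bar z_{ij}$, $x\ge0$; assumed feasible with unique optimal generation $x^*$. S-DC-OPF given bids $b\ge0$: same constraints, objective $\sum_n b_nx_n$. $\|\cdot\|$ is the Euclidean norm. Bid Adjustment Algorithm: given stepsizes $\beta_k>0$, each generator picks $b_n(1)\ge c_n$. For each $k\ge1$: $q_n(k)=\arg\max_{q\ge0}(b_n(k)q-f_n(q))$; the operator selects an optimizer $(x^{\rm opt}(k),z^{\rm opt}(k))$ of S-DC-OPF with bids $b(k)$;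 and $b_n(k+1)=[\,b_n(k)+\beta_k(x^{\rm opt}_n(k)-q_n(k))\,]^+$, where $[u]^+=\max\{0,u\}$. *)

(* Defs.v *)
From HB Require Import structures.
From mathcomp Require Import all_boot all_order all_algebra.
Set Implicit Arguments. Unset Strict Implicit. Unset Printing Implicit Defensive.
Import Order.TTheory GRing.Theory Num.Theory.
Local Open Scope ring_scope.

(* Network data:
   - buses 'I_Nb, generators 'I_N;
   - E : rel 'I_Nb is the directed edge set ((i,j) in E iff E i j);
   - bus n is the bus at which generator n sits (so G_i = [set n | bus n == i],
     and the G_i partition the generators);
   - zbar i j : line flow limit of edge (i,j); y i : load at bus i.
   Flows are z : 'I_Nb -> 'I_Nb -> R, only the values on edges matter. *)

Definition feasible (R : realFieldType) (Nb N : nat) (E : rel 'I_Nb)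
    (bus : 'I_N -> 'I_Nb) (zbar : 'I_Nb -> 'I_Nb -> R) (y : 'I_Nb -> R)
    (x : 'I_N -> R) (z : 'I_Nb -> 'I_Nb -> R) : Prop :=
  [/\ (forall i : 'I_Nb,
         \sum_(j : 'I_Nb | E i j) z i j - \sum_(j : 'I_Nb | E j i) z j i
         = \sum_(n : 'I_N | bus n == i) x n - y i),
      (forall i j : 'I_Nb, E i j -> `|z i j| <= zbar i j) &
      (forall n : 'I_N, 0 <= x n)].

Definition gen_cost (R : realFieldType) (a c : R) (x : R) : R := a * x ^+ 2 + c * x.

Definition dcopf_opt (R : realFieldType) (Nb N : nat) (E : rel 'I_Nb)
    (bus : 'I_N -> 'I_Nb) (zbar : 'I_Nb -> 'I_Nb -> R) (y : 'I_Nb -> R)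
    (a c : 'I_N -> R) (x : 'I_N -> R) (z : 'I_Nb -> 'I_Nb -> R) : Prop :=
  feasible E bus zbar y x z /\
  forall x' z', feasible E bus zbar y x' z' ->
    \sum_n gen_cost (a n) (c n) (x n) <= \sum_n gen_cost (a n) (c n) (x' n).

Definition sdcopf_opt (R : realFieldType) (Nb N : nat) (E : rel 'I_Nb)
    (bus : 'I_N -> 'I_Nb) (zbar : 'I_Nb -> 'I_Nb -> R) (y : 'I_Nb -> R)
    (b : 'I_N -> R) (x : 'I_N -> R) (z : 'I_Nb -> 'I_Nb -> R) : Prop :=
  feasible E bus zbar y x z /\
  forall x' z', feasible E bus zbar y x' z' ->
    \sum_n b n * x n <= \sum_n b n * x' n.

Definition is_argmax_profit (R : realFieldType) (a c b q : R) : Prop :=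
  0 <= q /\ forall q' : R, 0 <= q' ->
    b * q' - gen_cost a c q' <= b * q - gen_cost a c q.

Definition sqnorm (R : realFieldType) (N : nat) (v : 'I_N -> R) : R :=
  \sum_(n : 'I_N) v n ^+ 2.

(* Main.v *)
Require Import Defs.
From HB Require Import structures.
From mathcomp Require Import all_boot all_order all_algebra.
From mathcomp Require Import ring lra.
Import Order.TTheory GRing.Theory Num.Theory.
Local Open Scope ring_scope.

Lemma proj_bound (R : realFieldType) (u d : R) : 0 <= u ->
  (Num.max 0 (u + d) - u) ^+ 2 <= d ^+ 2.
Proof.
move=> hu; case: (lerP 0 (u + d)) => h.
  have -> : u + d - u = d by ring. by [].
rewrite !expr2; nra.
Qed.

Lemma q_bound (R : realFieldType) (a c b q xs : R) : 0 < a -> 0 <= xs ->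
  is_argmax_profit a c b q -> (q - xs) ^+ 2 * (4 * a ^+ 2) <= (b - (2 * a * xs + c)) ^+ 2.
Proof.
move=> ha hxs [hq0 hopt].
have ha0 : a != 0 by rewrite gt_eqF.
set p := (b - c) / (2 * a).
have hb : b = 2 * a * p + c by rewrite /p; field.
rewrite hb; rewrite hb in hopt.
case: (lerP 0 p) => hp.
  have := hopt p hp; rewrite /gen_cost !expr2 => h.
  have h2 : a * (q - p) ^+ 2 <= 0 by rewrite !expr2; nra.
  have h3 : (q - p) ^+ 2 <= 0 by rewrite -(pmulr_rle0 _ ha).
  have hqp : q = p.
    apply/eqP; rewrite -subr_eq0 -sqrf_eq0 eq_le h3 sqr_ge0 //.
  rewrite hqp; nra.
have := hopt 0 (lexx _); rewrite /gen_cost !expr2 => h.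
have h2 : a * q ^+ 2 <= 0 by rewrite !expr2; nra.
have h3 : q ^+ 2 <= 0 by rewrite -(pmulr_rle0 _ ha).
have hqp : q = 0.
  apply/eqP; rewrite -sqrf_eq0 eq_le h3 sqr_ge0 //.
rewrite hqp; nra.
Qed.

Lemma sum_sq_le (R : realFieldType) (N : nat) (u : 'I_N -> R) :
  (forall n, 0 <= u n) -> \sum_n u n ^+ 2 <= (\sum_n u n) ^+ 2.
Proof.
move=> hu.
set S := \sum_n u n.
have hS : forall n, u n <= S.
  move=> n; rewrite /S (bigD1 n) //= lerDl sumr_ge0 //.
apply: (@le_trans _ _ (\sum_n u n * S)).
  apply: ler_sum => n _; rewrite expr2 ler_wpM2l //.
by rewrite -mulr_suml expr2.
Qed.

Lemma feasible_sum (R : realFieldType) (Nb N : nat) (E : rel 'I_Nb)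
    (bus : 'I_N -> 'I_Nb) (zbar : 'I_Nb -> 'I_Nb -> R) (y : 'I_Nb -> R) x z :
  feasible E bus zbar y x z -> \sum_n x n = \sum_i y i.
Proof.
move=> [hbal _ _].
have h0 : \sum_i (\sum_(j | E i j) z i j - \sum_(j | E j i) z j i) = 0.
  rewrite sumrB.
  have -> : \sum_i \sum_(j | E j i) z j i = \sum_i \sum_(j | E i j) z i j.
    under eq_bigr => i _ do rewrite big_mkcond.
    rewrite exchange_big /=.
    apply: eq_bigr => i _; by rewrite [RHS]big_mkcond.
  by rewrite subrr.
have h1 : \sum_i (\sum_(n | bus n == i) x n - y i) = \sum_n x n - \sum_i y i.
  rewrite sumrB; congr (_ - _).
  rewrite (partition_big bus xpredT) //=.
rewrite (eq_bigr _ (fun i _ => hbal i)) h1 in h0.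
by apply/eqP; rewrite -subr_eq0 h0.
Qed.
Theorem lemma4p4 (R : realFieldType) (Nb N : nat) (E : rel 'I_Nb)
    (bus : 'I_N -> 'I_Nb) (zbar : 'I_Nb -> 'I_Nb -> R) (y : 'I_Nb -> R)
    (a c : 'I_N -> R)
    (* network / cost assumptions *)
    (hzbar : forall i j : 'I_Nb, E i j -> 0 < zbar i j)
    (hy : forall i : 'I_Nb, 0 <= y i)
    (ha : forall n : 'I_N, 0 < a n)
    (hc : forall n : 'I_N, 0 <= c n)
    (* DC-OPF feasible with unique optimal generation xstar *)
    (xstar : 'I_N -> R) (zstar : 'I_Nb -> 'I_Nb -> R)
    (hopt : dcopf_opt E bus zbar y a c xstar zstar)
    (huniq : forall x z, dcopf_opt E bus zbar y a c x z -> x = xstar)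
    (* each bus has no generator or at least two *)
    (hgen : forall i : 'I_Nb, #|[set n : 'I_N | bus n == i]| != 1%N)
    (hxpos : forall n : 'I_N, 0 < xstar n)
    (* an execution of the Bid Adjustment Algorithm *)
    (beta : nat -> R) (b : nat -> 'I_N -> R) (q : nat -> 'I_N -> R)
    (xopt : nat -> 'I_N -> R) (zopt : nat -> 'I_Nb -> 'I_Nb -> R)
    (hbeta : forall k : nat, (1 <= k)%N -> forall n : 'I_N, 0 < beta k < 2 * a n)
    (hb1 : forall n : 'I_N, c n <= b 1%N n)
    (hq : forall k : nat, (1 <= k)%N -> forall n : 'I_N,
        is_argmax_profit (a n) (c n) (b k n) (q k n))
    (hxopt : forall k : nat, (1 <= k)%N ->
        sdcopf_opt E bus zbar y (b k) (xopt k) (zopt k))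
    (hupd : forall k : nat, (1 <= k)%N -> forall n : 'I_N,
        b k.+1 n = Num.max 0 (b k n + beta k * (xopt k n - q k n)))
    (* a_min = min_n a_n *)
    (amin : R) (hamin_lb : forall n : 'I_N, amin <= a n)
    (hamin_att : exists n : 'I_N, a n = amin) :
  let bstar := fun n : 'I_N => 2 * a n * xstar n + c n in
  let ybar := \sum_(i : 'I_Nb) y i in
  forall k : nat, (1 <= k)%N ->
    sqnorm (fun n => b k.+1 n - b k n)
      <= beta k ^+ 2 / (2 * amin ^+ 2) * sqnorm (fun n => b k n - bstar n)
         + 8 * beta k ^+ 2 * ybar ^+ 2.
Proof.
move=> bstar ybar k hk.
have [n0 hn0] := hamin_att.
have hamin : 0 < amin by rewrite -hn0.
have hbk : forall n, 0 <= b k n.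
  move=> n; case: k hk => [//|[|m]] _.
    exact: le_trans (hc n) (hb1 n).
  by rewrite hupd // le_max lexx.
have [hbeta0 _] := andP (hbeta k hk n0).
have hxs : forall n, 0 <= xstar n by move=> n; exact: ltW.
have [hfopt _] := hxopt k hk.
have [_ _ hx0] := hfopt.
have [[_ _ hxs0] _] := hopt.
have per : forall n, (b k.+1 n - b k n) ^+ 2 <=
    beta k ^+ 2 / (2 * amin ^+ 2) * (b k n - bstar n) ^+ 2
    + 2 * beta k ^+ 2 * (xopt k n - xstar n) ^+ 2.
  move=> n.
  have h1 := @proj_bound _ (b k n) (beta k * (xopt k n - q k n)) (hbk n).
  rewrite -hupd // in h1.
  have h2 := @q_bound _ _ _ _ _ _ (ha n) (hxs n) (hq k hk n).
  rewrite -/(bstar n) in h2.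
  have h3 : (q k n - xstar n) ^+ 2 * (4 * amin ^+ 2) <= (b k n - bstar n) ^+ 2.
    apply: le_trans h2; apply: ler_wpM2l; first exact: sqr_ge0.
    apply: ler_wpM2l => //; rewrite ler_sqr ?nnegrE //; exact: ltW.
  have h4 : (q k n - xstar n) ^+ 2 <= (b k n - bstar n) ^+ 2 / (4 * amin ^+ 2).
    by rewrite ler_pdivlMr // mulr_gt0 // exprn_gt0.
  have h5 : beta k ^+ 2 / (2 * amin ^+ 2) * (b k n - bstar n) ^+ 2
      = 2 * beta k ^+ 2 * ((b k n - bstar n) ^+ 2 / (4 * amin ^+ 2)).
    by field; rewrite gt_eqF // exprn_gt0.
  rewrite h5.
  move: h1 h4; set w := (_ / (4 * amin ^+ 2)) => h1 h4.
  have h6 : (xopt k n - q k n) ^+ 2 <= 2 * (xopt k n - xstar n) ^+ 2 + 2 * w.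
    have hsq := sqr_ge0 (xopt k n - xstar n + (q k n - xstar n)).
    move: h4 hsq; rewrite !expr2 => h4 hsq; nra.
  apply: le_trans h1 _.
  rewrite exprMn.
  have h7 := ler_wpM2l (sqr_ge0 (beta k)) h6.
  apply: le_trans h7 _; lra.
apply: le_trans (ler_sum _ (fun n _ => per n)) _.
rewrite big_split /= -!mulr_sumr lerD2l.
have hsx : \sum_n xopt k n = ybar := @feasible_sum _ _ _ _ _ _ _ _ _ hfopt.
have hss : \sum_n xstar n = ybar := @feasible_sum _ _ _ _ _ _ _ _ _ (proj1 hopt).
have hS : \sum_n (xopt k n - xstar n) ^+ 2 <= 4 * ybar ^+ 2.
  apply: (@le_trans _ _ (\sum_n (xopt k n + xstar n) ^+ 2)).
    apply: ler_sum => n _; rewrite !expr2.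
    have := hx0 n; have := hxs n; nra.
  apply: le_trans (@sum_sq_le _ _ _ _) _ => [n|].
    by rewrite addr_ge0.
  rewrite big_split /= hsx hss; rewrite !expr2; lra.
have -> : 8 * beta k ^+ 2 * ybar ^+ 2 = 2 * beta k ^+ 2 * (4 * ybar ^+ 2) by ring.
by rewrite ler_wpM2l // mulr_ge0 // sqr_ge0.
Qed.
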